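(* Let $G,H$ be real Hilbert spaces, let $D\subset G$ be bounded, let $x\in D$, and let $K_F,L_F,\lambda_F,L_f,\lambda_f,K_f\ge0$ be constants with $\lambda_F\le K_F^2$ and $\lambda_f\le L_f$. Let $F:G\to H$ be $K_F$-BJ, $L_F$-LJ and $\lambda_F$-UC on $D$, let $f:H\to\mathbb{R}$ be $L_f$-LG and $\lambda_f$-PL on $F(D)$, and suppose $\|\nabla f(F(x))\|\le K_f$. Let $L=K_F^2L_f+K_fL_F$, $\lambda=\lambda_F\lambda_f$, $\alpha\in(0,\tfrac2L)$, $q=1+L\alpha^2\lambda-2\alpha\lambda$, and $x^\alpha=x-\alpha\nabla(f\circ F)(x)$. If $[x,x^\alpha]\subset D$, then \[ (f\circ F)(x^\alpha)-f_*\le q\bigl((f\circ F)(x)-f_*\bigr), \] where $f_*=\inf_{h\in H}f(h)$.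
   Context: For $F:G\to H$ between Hilbert spaces, $\partial F(x)$ is the Fréchet derivative and $\partial F(x)^*$ its adjoint; $\nabla f$ denotes gradients of real-valued functions; $[x,y]=\{(1-t)x+ty:t\in[0,1]\}$. For $F$ differentiable on $D$: $K$-BJ on $D$ means $\|\partial F(x)\|\le K$ for $x\in D$; $L$-LJ on $D$ means $\|\partial F(x)-\partial F(y)\|\le L\|x-y\|$ for $x,y\in D$; $\lambda$-UC on $D$ ($\lambda>0$) means $\langle y,\partial F(x)\partial F(x)^*y\rangle\ge\lambda\|y\|^2$ for all $y\in H$, $x\in D$. For $f:H\to\mathbb{R}$ differentiable on $E$: $L$-LG on $E$ means $\|\nabla f(u)-\nabla f(v)\|\le L\|u-v\|$ for $u,v\in E$; if $f$ is bounded below on $H$ with $f_*=\inf_Hf\in\mathbb{R}$, $\lambda$-PL on $E$ ($\lambda>0$) means $\tfrac12\|\nabla f(u)\|^2\ge\lambda(f(u)-f_* )$ for $u\in E$. *)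

(* Defs.v *)
From HB Require Import structures.
From mathcomp Require Import all_boot all_order all_algebra.
From mathcomp Require Import all_classical all_reals all_analysis.
Set Implicit Arguments. Unset Strict Implicit. Unset Printing Implicit Defensive.
Import Order.TTheory GRing.Theory Num.Theory.
Import numFieldNormedType.Exports.
Local Open Scope classical_set_scope.
Local Open Scope ring_scope.

(* A real Hilbert space is a completeNormedModType R equipped with such an
   inner product (norm induced by the inner product, complete). *)
Record inner_product (R : realType) (V : normedModType R) := InnerProduct {
  ip :> V -> V -> R;
  ip_sym : forall u v, ip u v = ip v u;
  ip_linl : forall (a : R) u v w, ip (a *: u + v) w = a * ip u w + ip v w;
  ip_norm : forall u, ip u u = `|u| ^+ 2 }.

Section Defs.
Variable R : realType.

Definition gradient (V : normedModType R) (iV : inner_product V)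
  (f : V -> R) (u : V) : V :=
  xget 0 [set g | forall h, 'd f u h = iV g h].

Definition adjoint (G H : normedModType R) (iG : inner_product G)
  (iH : inner_product H) (A : G -> H) (y : H) : G :=
  xget 0 [set z | forall u, iH (A u) y = iG u z].

Definition opnorm_le (G H : normedModType R) (A : G -> H) (K : R) :=
  forall v, `|A v| <= K * `|v|.

Definition differentiable_on (G H : normedModType R) (F : G -> H) (D : set G) :=
  forall x, D x -> differentiable F x.

Definition BJ (G H : normedModType R) (F : G -> H) (D : set G) (K : R) :=
  differentiable_on F D /\ forall x, D x -> opnorm_le ('d F x) K.

Definition LJ (G H : normedModType R) (F : G -> H) (D : set G) (L : R) :=
  differentiable_on F D /\
  forall x y, D x -> D y ->
    opnorm_le (fun v => 'd F x v - 'd F y v) (L * `|x - y|).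

Definition UC (G H : normedModType R) (iG : inner_product G)
  (iH : inner_product H) (F : G -> H) (D : set G) (lam : R) :=
  0 < lam /\ differentiable_on F D /\
  forall x, D x -> forall y : H,
    iH y ('d F x (adjoint iG iH ('d F x) y)) >= lam * `|y| ^+ 2.

Definition LG (V : normedModType R) (iV : inner_product V) (f : V -> R)
  (E : set V) (L : R) :=
  differentiable_on f E /\
  forall u v, E u -> E v -> `|gradient iV f u - gradient iV f v| <= L * `|u - v|.

Definition finf (V : normedModType R) (f : V -> R) : R := inf (range f).

Definition PL (V : normedModType R) (iV : inner_product V) (f : V -> R)
  (E : set V) (lam : R) :=
  0 < lam /\ has_lbound (range f) /\ differentiable_on f E /\
  forall u, E u -> 2^-1 * `|gradient iV f u| ^+ 2 >= lam * (f u - finf f).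

Definition segment (V : normedModType R) (x y : V) : set V :=
  [set (1 - t) *: x + t *: y | t in `[0, 1]%classic].

End Defs.

(* Main.v *)
Require Import Defs.
From HB Require Import structures.
From mathcomp Require Import all_boot all_order all_algebra.
From mathcomp Require Import all_classical all_reals all_analysis.
From mathcomp Require Import ring lra.
Import Order.TTheory GRing.Theory Num.Theory.
Import numFieldNormedType.Exports.
Local Open Scope classical_set_scope.
Local Open Scope ring_scope.

Section IP.
Variables (R : realType) (V : normedModType R) (i : inner_product V).

Lemma ipDl u v w : i (u + v) w = i u w + i v w.
Proof. by have := ip_linl i 1 u v w; rewrite scale1r mul1r. Qed.
Lemma ip0l w : i 0 w = 0.
Proof. by have := ipDl 0 0 w; rewrite addr0 => /eqP; rewrite -subr_eq subrr eq_sym => /eqP. Qed.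
Lemma ipZl a u w : i (a *: u) w = a * i u w.
Proof. by have := ip_linl i a u 0 w; rewrite addr0 ip0l addr0. Qed.
Lemma ipNl u w : i (- u) w = - i u w.
Proof. by rewrite -scaleN1r ipZl mulN1r. Qed.
Lemma ipBl u v w : i (u - v) w = i u w - i v w.
Proof. by rewrite ipDl ipNl. Qed.
Lemma ipDr u v w : i w (u + v) = i w u + i w v.
Proof. by rewrite (ip_sym i) ipDl (ip_sym i u) (ip_sym i v). Qed.
Lemma ip0r w : i w 0 = 0.
Proof. by rewrite (ip_sym i) ip0l. Qed.
Lemma ipZr a u w : i w (a *: u) = a * i w u.
Proof. by rewrite (ip_sym i) ipZl (ip_sym i). Qed.
Lemma ipNr u w : i w (- u) = - i w u.
Proof. by rewrite (ip_sym i) ipNl (ip_sym i). Qed.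
Lemma ipBr u v w : i w (u - v) = i w u - i w v.
Proof. by rewrite ipDr ipNr. Qed.

Lemma ip_cs u v : `| i u v | <= `|u| * `|v|.
Proof.
have [->|vn0] := eqVneq v 0; first by rewrite ip0r normr0 normr0 mulr0.
have bp : 0 < `|v| by rewrite normr_gt0.
pose w := `|v| ^+ 2 *: u - i u v *: v.
have e := ip_norm i w.
have h2 : 0 <= `|w| ^+ 2 by rewrite exprn_ge0.
rewrite -e /w in h2.
rewrite !(ipBl, ipBr, ipZl, ipZr) !ip_norm (ip_sym i v u) in h2.
have key : i u v ^+ 2 <= (`|u| * `|v|) ^+ 2.
  move: h2. set p := i u v. set a := `|u|. set b := `|v|. move=> h2.
  have E : b ^+ 2 * (b ^+ 2 * a ^+ 2) - b ^+ 2 * (p * p) -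
    (p * (b ^+ 2 * p) - p * (p * b ^+ 2)) = b ^+ 2 * ((a * b) ^+ 2 - p ^+ 2) by ring.
  rewrite E in h2.
  by rewrite pmulr_rge0 ?exprn_gt0 // subr_ge0 in h2.
by rewrite -ler_sqr ?nnegrE ?mulr_ge0 // -normrX ger0_norm // sqr_ge0.
Qed.
End IP.
Arguments ipDl {R V} i.
Arguments ip0l {R V} i.
Arguments ipZl {R V} i.
Arguments ipNl {R V} i.
Arguments ipBl {R V} i.
Arguments ipDr {R V} i.
Arguments ip0r {R V} i.
Arguments ipZr {R V} i.
Arguments ipNr {R V} i.
Arguments ipBr {R V} i.
Arguments ip_cs {R V} i.

Lemma fermat_max (R : realType) (f : R -> R) c :
  derivable f c 1 -> (forall t, f t <= f c) -> 'D_1 f c = 0.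
Proof.
move=> fdrvbl cmax; apply/eqP; rewrite eq_le; apply/andP; split.
  rewrite ['D_1 f c]cvg_at_rightE; last exact: fdrvbl.
  apply: limr_le.
    have dfc := fdrvbl.
    rewrite -(cvg_at_rightE (fun h : R => h^-1 *: ((f \o shift c) _ - f c))) //.
    apply: cvg_trans dfc; apply: cvg_app.
    move=> A [e egt0 Ae]; exists e => // x xe xgt0; apply: Ae => //.
    exact/lt0r_neq0.
  near=> h; apply: mulr_ge0_le0.
    by rewrite invr_ge0; apply: ltW; near: h; exists 1 => /=.
  by rewrite subr_le0 [_%:A]mulr1; apply: cmax.
rewrite ['D_1 f c]cvg_at_leftE; last exact: fdrvbl.
apply: limr_ge.
  have dfc := fdrvbl; rewrite -(cvg_at_leftE (fun h => h^-1 *: ((f \o shift c) _ - f c))) //.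
  apply: cvg_trans dfc; apply: cvg_app.
  move=> A [e egt0 Ae]; exists e => // x xe xgt0; apply: Ae => //.
  exact/ltr0_neq0.
near=> h; apply: mulr_le0.
  by rewrite invr_le0; apply: ltW; near: h; exists 1 => /=.
by rewrite subr_le0 [_%:A]mulr1; apply: cmax.
Unshelve. all: by end_near. Qed.

Lemma fermat_min (R : realType) (f : R -> R) c :
  derivable f c 1 -> (forall t, f c <= f t) -> 'D_1 f c = 0.
Proof.
move=> df cmin; apply/eqP; rewrite -oppr_eq0 -deriveN //; apply/eqP.
apply: fermat_max; first exact: derivableN.
by move=> t /=; rewrite lerN2.
Qed.

Lemma diff_min (R : realType) (V : normedModType R) (f : V -> R) u :
  differentiable f u -> (forall v, f u <= f v) -> forall h, 'd f u h = 0.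
Proof.
move=> df umin h.
pose phi := fun s : R => f (s *: h + u).
have E : 'D_1 phi 0 = 'D_h f u.
  rewrite /derive /phi; set g1 := (fun _ => _); set g2 := (fun _ => _). suff -> : g1 = g2 by []. rewrite /g1 /g2.
  by rewrite funeqE => s /=; rewrite addr0 scale0r add0r [_%:A]mulr1.
rewrite -deriveE // -E; apply: fermat_min.
  by apply: (proj1 (derivable1P f u h)); exact: diff_derivable.
by move=> t; rewrite /phi scale0r add0r.
Qed.

Lemma der_line (R : realType) (G : normedModType R) (g : G -> R) (x d : G) (t : R) :
  differentiable g (x + t *: d) ->
  is_derive t 1 (fun s => g (x + s *: d)) ('d g (x + t *: d) d).
Proof.
move=> dg.
pose gam := (cst x + ( *:%R^~ d)) : R -> G.
have gamE : (fun s => g (x + s *: d)) = g \o gam by [].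
have dgam : differentiable gam t.
  have H : differentiable (( *:%R^~ d) : R -> G) t by exact: ex_diff.
  by apply: differentiableD; first exact: differentiable_cst.
have H : differentiable (( *:%R^~ d) : R -> G) t by exact: ex_diff.
have dgamE : 'd gam t = *:%R^~ d :> (R -> G).
  have E2 : 'd (( *:%R^~ d) : R -> G) t = *:%R^~ d :> (R -> G) by exact: diff_val.
  rewrite diffD // ?diff_cst E2; apply/funext => s /=; exact: add0r.
rewrite gamE; have dc : differentiable (g \o gam) t by exact: differentiable_comp.
apply: DeriveDef; first exact: diff_derivable.
by rewrite deriveE // diff_comp // /= dgamE /= scale1r.
Qed.

Lemma descent (R : realType) (G : normedModType R) (h : G -> R) (x d : G) (K : R) :
  (forall t, 0 <= t <= 1 -> differentiable h (x + t *: d)) ->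
  (forall t, 0 < t < 1 -> 'd h (x + t *: d) d - 'd h x d <= 2 * K * t) ->
  h (x + d) <= h x + 'd h x d + K.
Proof.
move=> hd hL.
set c := 'd h x d.
pose phi := fun s : R => h (x + s *: d).
pose psi : R -> R := phi - (c \*o id) - (K \*o (@GRing.exp R ^~ 2)).
have dphi (s : R) : 0 <= s <= 1 -> is_derive s 1 phi ('d h (x + s *: d) d).
  by move=> /hd; exact: der_line.
have dpsi (s : R) : 0 <= s <= 1 -> derivable psi s 1.
  move=> /dphi ds; apply: derivableB; last first.
    by apply: derivableM => //; exact: exprn_derivable.
  apply: derivableB; first exact: ex_derive.
  by apply: derivableM => //; exact: derivable_id.
have Dpsi (s : R) : 0 <= s <= 1 -> derive1 psi s = 'd h (x + s *: d) d - c - K * (2 * s).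
  move=> /[dup] s01 /dphi ds.
  rewrite derive1E /psi deriveB; last 2 first.
  - apply: derivableB; first exact: ex_derive.
    by apply: derivableM => //; exact: derivable_id.
  - by apply: derivableM => //; exact: exprn_derivable.
  rewrite deriveB; last 2 first.
  - exact: ex_derive.
  - by apply: derivableM => //; exact: derivable_id.
  rewrite (@derive_val _ _ _ _ _ _ _ ds).
  rewrite deriveMl; last exact: derivable_id.
  rewrite deriveMl; last exact: exprn_derivable.
  by rewrite derive_id exp_derive /= expr1 mulr1 [_%:A]mulr1.
have cont : {within `[0, 1], continuous psi}.
  apply: derivable_within_continuous => s; rewrite in_itv /= => s01; exact: dpsi.
have H01 : psi 1 <= psi 0.
  apply: (@ler0_derive1_le_cc R psi 0 1) => //.
  - move=> s; rewrite in_itv /= => /andP[s0 s1]; by apply: dpsi; rewrite !ltW.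
  - move=> s; rewrite in_itv /= => /andP[s0 s1]; rewrite Dpsi; last by rewrite !ltW.
    have := hL s; rewrite s0 s1 /= => /(_ isT); rewrite -/c; lra.
  - by rewrite in_itv /= ler01 lexx.
  - by rewrite in_itv /= ler01 lexx.
have E (s : R) : psi s = h (x + s *: d) - c * s - K * s ^+ 2 by [].
move: H01; rewrite !E scale1r scale0r addr0 expr1n expr0n /= !mulr0 !mulr1 !subr0; lra.
Qed.

Section IPL.
Variables (R : realType) (V : normedModType R) (i : inner_product V).

Lemma ipl_linear (e : V) : linear (fun u => i u e).
Proof. by move=> a u v; rewrite ip_linl. Qed.

Definition iplin (e : V) : {linear V -> R} :=
  HB.pack (fun u => i u e) (GRing.isLinear.Build _ _ _ _ _ (ipl_linear e)).

Lemma iplin_cont (e : V) : continuous (iplin e).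
Proof.
apply: bounded_linear_continuous; apply/linear_boundedP.
near=> r => u; rewrite /=.
have h := ip_cs i u e.
apply: (le_trans h); rewrite mulrC ler_wpM2r //.
Unshelve. all: by end_near. Qed.

Lemma diff_ipl (G : normedModType R) (F : G -> V) (z : G) (e : V) :
  differentiable F z ->
  differentiable (fun w => i (F w) e) z /\
  forall v, 'd (fun w => i (F w) e) z v = i ('d F z v) e.
Proof.
move=> dF.
have dl : differentiable (iplin e) (F z) by apply: linear_differentiable; exact: iplin_cont.
have -> : (fun w => i (F w) e) = iplin e \o F by [].
split; first exact: differentiable_comp.
move=> v; rewrite diff_comp //=. have E := @diff_lin R V R (iplin e) (F z) (iplin_cont e). by rewrite E.
Qed.
End IPL.
Arguments diff_ipl {R V} i {G F z} e.

Lemma seg_lip (R : realType) (G H : normedModType R) (iH : inner_product H)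
  (F : G -> H) (x d : G) (K t : R) :
  0 <= K -> 0 <= t ->
  (forall s, 0 <= s <= t -> differentiable F (x + s *: d)) ->
  (forall s, 0 <= s <= t -> `|'d F (x + s *: d) d| <= K * `|d|) ->
  `|F (x + t *: d) - F x| <= K * t * `|d|.
Proof.
move=> K0 t0 dF bF.
set e := F (x + t *: d) - F x.
pose h := fun w => iH (F w) e.
have dh s : 0 <= s <= t -> is_derive s 1 (fun s => h (x + s *: d)) (iH ('d F (x + s *: d) d) e).
  move=> /dF ds; have [dd de] := diff_ipl iH e ds.
  by rewrite -de; exact: der_line.
have [c c0t E] : exists2 c, c \in `[0, t] & h (x + t *: d) - h (x + 0 *: d) =
    iH ('d F (x + c *: d) d) e * (t - 0).
  apply: (@MVT_segment R (fun s => h (x + s *: d)) (fun s => iH ('d F (x + s *: d) d) e) 0 t) => //.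
    by move=> s; rewrite in_itv /= => /andP[s0 s1]; apply: dh; rewrite !ltW.
  apply: derivable_within_continuous => s; rewrite in_itv /= => s01.
  by case: (dh s s01).
move: c0t; rewrite in_itv /= => c0t.
rewrite /h scale0r addr0 subr0 -ipBl -/e ip_norm in E.
have h1 := ip_cs iH ('d F (x + c *: d) d) e.
have h2 := bF c c0t.
have ne := normr_ge0 e.
have nd := normr_ge0 d.
have na := normr_ge0 ('d F (x + c *: d) d).
have h3 : `|e| ^+ 2 <= K * `|d| * `|e| * t.
  rewrite E ler_wpM2r //; apply: (le_trans (ler_norm _)); apply: (le_trans h1).
  by rewrite ler_wpM2r.
have M0 : 0 <= K * t * `|d| by rewrite !mulr_ge0.
have [e0|ep] := eqVneq `|e| 0; first by rewrite e0.
have ep' : 0 < `|e| by rewrite lt_def ep ne.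
rewrite -(ler_pM2r ep'); rewrite expr2 in h3; nra.
Qed.

Lemma grad_ok (R : realType) (H : normedModType R) (iH : inner_product H)
  (f : H -> R) (E : set H) lam u :
  PL iH f E lam -> E u -> forall h, 'd f u h = iH (gradient iH f u) h.
Proof.
move=> [lp [lb [df pl]]] Eu.
have := pl u Eu; rewrite /gradient.
case: xgetP => [g _ Pg|NP] //.
rewrite normr0 expr0n /= mulr0 => hle.
have fmin : forall v, f u <= f v.
  move=> v; have h1 : finf f <= f v by apply: (ge_inf lb); exact: imageT.
  have h2 : f u - finf f <= 0.
    by rewrite -(pmulr_rle0 _ lp).
  lra.
exfalso; apply: (NP 0) => h; rewrite ip0l.
exact: diff_min (df u Eu) fmin h.
Qed.
Arguments grad_ok {R H iH f E lam u}.

Theorem proposition10 (R : realType) (G H : completeNormedModType R)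
  (iG : inner_product G) (iH : inner_product H)
  (D : set G) (x : G) (KF LF lamF Lf lamf Kf : R)
  (F : G -> H) (f : H -> R) (alpha : R) :
  bounded_set D -> D x ->
  0 <= KF -> 0 <= LF -> 0 <= lamF -> 0 <= Lf -> 0 <= lamf -> 0 <= Kf ->
  lamF <= KF ^+ 2 -> lamf <= Lf ->
  BJ F D KF -> LJ F D LF -> UC iG iH F D lamF ->
  LG iH f (F @` D) Lf -> PL iH f (F @` D) lamf ->
  `|gradient iH f (F x)| <= Kf ->
  let L := KF ^+ 2 * Lf + Kf * LF in
  let lam := lamF * lamf in
  0 < alpha -> alpha < 2 / L ->
  let q := 1 + L * alpha ^+ 2 * lam - 2 * alpha * lam in
  let xa := x - alpha *: gradient iG (f \o F) x in
  segment x xa `<=` D ->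
  (f \o F) xa - finf f <= q * ((f \o F) x - finf f).
Proof.
move=> _ Dx KF0 LF0 lamF0 Lf0 lamf0 Kf0 lFK lfL [dF bJ] [_ lJ] [lFp [_ uc]]
  [_ lg] PLf yK L lam ap aL q xa seg.
have PLf' := PLf; move: PLf' => [lfp [lb [df pl]]].
set y := gradient iH f (F x).
set g := gradient iG (f \o F) x.
set d := - (alpha *: g).
have Dseg (t : R) : 0 <= t <= 1 -> D (x + t *: d).
  move=> t01; apply: seg; exists t; first by rewrite /= in_itv /= t01.
  by rewrite /xa scalerBl scale1r scalerDr addrA subrK.
have FD (t : R) : 0 <= t <= 1 -> (F @` D) (F (x + t *: d)).
  by move=> t01; exists (x + t *: d) => //; exact: Dseg.
have FDx : (F @` D) (F x) by exists x.
have dFx := dF x Dx.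
have dfx := df (F x) FDx.
pose A := 'd F x.
pose z := adjoint iG iH A y.
have exz : exists w, forall u, iH (A u) y = iG u w.
  have [y0|yn0] := eqVneq y 0.
    by exists 0 => u; rewrite y0 !ip0r.
  apply: contrapT => nex.
  have a0 : adjoint iG iH A y = 0.
    by apply: xgetPN => w hw; apply: nex; exists w.
  have := uc x Dx y; rewrite -/A a0 linear0 ip0r.
  have : 0 < lamF * `|y| ^+ 2 by rewrite mulr_gt0 // exprn_gt0 // normr_gt0.
  lra.
have hz : forall u, iH (A u) y = iG u z := xgetPex 0 exz.
have exg : exists w, forall h, 'd (f \o F) x h = iG w h.
  exists z => h'.
  rewrite diff_comp //= (grad_ok PLf FDx) -/y (ip_sym iH) hz (ip_sym iG) //.
have hg : forall h, 'd (f \o F) x h = iG g h := xgetPex 0 exg.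
have hc : forall h, iG g h = iG h z.
  move=> h; rewrite -hz -hg; rewrite diff_comp //= (grad_ok PLf FDx) -/y (ip_sym iH) //.
have gg : iG g g = iG z z by rewrite (hc g) (hc z).
have ucz : lamF * `|y| ^+ 2 <= iG z z.
  by have := uc x Dx y; rewrite -/A -/z (ip_sym iH) hz.
have ply := pl (F x) FDx; rewrite -/y in ply.
have hyp1 (t : R) : 0 <= t <= 1 -> differentiable (f \o F) (x + t *: d).
  move=> t01; apply: differentiable_comp; first exact: dF (Dseg t t01).
  by apply: df; exact: FD.
have hyp2 (t : R) : 0 < t < 1 ->
    'd (f \o F) (x + t *: d) d - 'd (f \o F) x d <= 2 * (L / 2 * `|d| ^+ 2) * t.
  move=> /andP[t0 t1].
  have t01 : 0 <= t <= 1 by rewrite !ltW.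
  have Dt := Dseg t t01.
  have FDt := FD t t01.
  rewrite (diff_comp (dF _ Dt) (df _ FDt)) (diff_comp dFx dfx).
  rewrite /= (grad_ok PLf FDt) (grad_ok PLf FDx) -/y.
  set xt := x + t *: d.
  set yt := gradient iH f (F xt).
  set At := 'd F xt.
  have sp : iH yt (At d) - iH y (A d) = iH (yt - y) (At d) + iH y (At d - A d).
    by rewrite ipBl ipBr addrA subrK.
  have sl : `|F xt - F x| <= KF * t * `|d|.
    apply: seg_lip => //; first exact: ltW.
      move=> s /andP[s0 st]; apply: dF; apply: Dseg; rewrite s0 /=.
      exact: le_trans st (ltW t1).
    move=> s /andP[s0 st]; apply: bJ; apply: Dseg; rewrite s0 /=.
    exact: le_trans st (ltW t1).
  have b1 : iH (yt - y) (At d) <= Lf * KF ^+ 2 * t * `|d| ^+ 2.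
    apply: le_trans (ler_norm _) _; apply: le_trans (ip_cs iH _ _) _.
    have e1 : `|yt - y| <= Lf * (KF * t * `|d|).
      apply: le_trans (lg _ _ FDt FDx) _; exact: ler_wpM2l.
    have e2 := bJ xt Dt d.
    apply: le_trans (ler_pM (normr_ge0 _) (normr_ge0 _) e1 e2) _.
    rewrite le_eqVlt; apply/orP; left; apply/eqP; ring.
  have b2 : iH y (At d - A d) <= Kf * LF * t * `|d| ^+ 2.
    apply: le_trans (ler_norm _) _; apply: le_trans (ip_cs iH _ _) _.
    have e2 := lJ xt x Dt Dx d; rewrite /= -/At -/A in e2.
    have xtx : `|xt - x| = t * `|d|.
      by rewrite /xt addrC addKr normrZ ger0_norm // ltW.
    rewrite xtx in e2.
    apply: le_trans (ler_pM (normr_ge0 _) (normr_ge0 _) yK e2) _.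
    rewrite le_eqVlt; apply/orP; left; apply/eqP; ring.
  rewrite sp /L.
  have -> : 2 * ((KF ^+ 2 * Lf + Kf * LF) / 2 * `|d| ^+ 2) * t =
    Lf * KF ^+ 2 * t * `|d| ^+ 2 + Kf * LF * t * `|d| ^+ 2 by field.
  exact: (lerD b1 b2).
have desc := @descent R G (f \o F) x d _ hyp1 hyp2.
rewrite hg /d ipNr ipZr normrN normrZ ger0_norm ?(ltW ap) // in desc.
rewrite -/d in desc.
have gn : `|g| ^+ 2 = iG g g by rewrite ip_norm.
rewrite exprMn gn gg in desc.
change ((f \o F) (x + d) - finf f <= q * ((f \o F) x - finf f)).
set P := (f \o F) x - finf f.
set G2 := iG z z.
have Lp : 0 < L.
  have h1 : 0 < KF ^+ 2 * Lf.
    apply: mulr_gt0; first exact: lt_le_trans lFp lFK.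
    exact: lt_le_trans lfp lfL.
  have h2 : 0 <= Kf * LF by rewrite mulr_ge0.
  rewrite /L; lra.
have aL' : alpha * L < 2 by rewrite -ltr_pdivlMr.
have cpos : 0 < alpha - L / 2 * alpha ^+ 2.
  have -> : alpha - L / 2 * alpha ^+ 2 = alpha * (1 - alpha * L / 2) by field.
  apply: mulr_gt0 => //; lra.
have H1 : 2 * lam * P <= G2.
  rewrite /lam; apply: le_trans ucz.
  have : 2 * lamf * P <= `|y| ^+ 2 by rewrite /P /=; lra.
  move=> h; have h' := ler_wpM2l lamF0 h; apply: le_trans h'.
  rewrite le_eqVlt; apply/orP; left; apply/eqP; ring.
have H2 : 0 <= (alpha - L / 2 * alpha ^+ 2) * (G2 - 2 * lam * P).
  by apply: mulr_ge0; [exact: ltW cpos | rewrite subr_ge0].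
rewrite /q.
have E : (f \o F) (x + d) - finf f <= P - (alpha - L / 2 * alpha ^+ 2) * G2.
  rewrite /P /G2; move: desc; rewrite /=; lra.
move: E H2; rewrite /lam; nra.
Qed.
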